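(* Let $\mathcal{V}$ be a finite veering triangulation with face set $F$, let $w$ be a weight system on $\mathcal{V}$, $F_w=\{f\in F: w_f>0\}$, and $\varphi\in\mathrm{Aut}^+(\mathcal{Q}_{\mathcal{V},w})$. For $f\in F_w$ define the sequence $g^\varphi(f)=(g_i)_{i\ge1}$ of triangles of $\mathcal{Q}_{\mathcal{V},w}$ by $g_1=\varphi(L(f))$ and, for $i\ge1$, stop if $g_i\in U(F_w)$, and otherwise set $g_{i+1}=\varphi(\mathfrak{a}(g_i))$. Then for every $f\in F_w$ the sequence $g^\varphi(f)$ is finite, and if $f,f'\in F_w$ are distinct, then the last elements of $g^\varphi(f)$ and $g^\varphi(f')$ are distinct.
   Context: A veering triangulation is in particular an ideal triangulation of a 3-manifold with a taut structure: a coorientation of faces such that each tetrahedron has two faces cooriented out and two cooriented in, and each edge is the top diagonal (common edge of the two outward-cooriented faces) of exactly one tetrahedron and the bottom diagonal of exactly one. For an edge $e$, its two sides are separated by the tetrahedra where $e$ is top and bottom diagonal. A weight system $w=(w_f)$ is a nonzero nonnegative integral solution to the branch equations (for each edge, the weights of faces on the two sides have equal sums). Pulling apart sheets of $\sum w_f f$ gives an embedded surface triangulated by $\mathcal{Q}_{\mathcal{V},w}$, which has exactly $w_f$ triangles that are copies of each face $f$. The copies of a face $f$ are linearly ordered along the coorientation; $L(f)$ and $U(f)$ are the lowermost and uppermost copies, $L(F_w)$ and $U(F_w)$ the sets of these, and for a copy $y$ that is not uppermost, $\mathfrak{a}(y)$ is the copy of the same face immediately above $y$. $\mathrm{Aut}^+(\mathcal{Q}_{\mathcal{V},w})$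 is the group of orientation-preserving combinatorial automorphisms of $\mathcal{Q}_{\mathcal{V},w}$; in particular each induces a bijection on the set of triangles. *)

(* Defs.v *)
From mathcomp Require Import all_boot.
Set Implicit Arguments. Unset Strict Implicit. Unset Printing Implicit Defensive.

(* Combinatorial shadow of a finite veering triangulation: its (finite) face
   set F, its (finite) edge set E and, for every edge e, the two sets of faces
   lying on the two sides of e (separated by the tetrahedra in which e is the
   top, resp. bottom, diagonal). *)

Definition weight_system (F E : finType) (side1 side2 : E -> {set F})
    (w : F -> nat) : Prop :=
  (exists f, w f != 0) /\
  forall e, \sum_(f in side1 e) w f = \sum_(f in side2 e) w f.

(* Triangles of Q_{V,w}: the copies (f, k), 0 <= k < w f, of the faces f,
   numbered from the bottom along the coorientation. *)
Definition tri (F : finType) (w : F -> nat) := {p : F * nat | p.2 < w p.1}.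

Section Copies.
Variables (F : finType) (w : F -> nat).

Definition lowcopy (f : F) (hf : 0 < w f) : tri w := exist _ (f, 0) hf.

Definition is_upper (y : tri w) : bool := (sval y).2.+1 == w (sval y).1.

(* a(y): copy of the same face immediately above y (only meaningful when y is
   not uppermost; otherwise returns y itself, a value that is never used). *)
Definition above (y : tri w) : tri w :=
  insubd y ((sval y).1, (sval y).2.+1).

(* The sequence g^phi(f), indexed from 0 (g_{i+1} here is the paper's g_{i+2});
   after reaching an element of U(F_w) it is frozen (the paper stops). *)
Fixpoint gseq (phi : tri w -> tri w) (f : F) (hf : 0 < w f) (i : nat) : tri w :=
  match i with
  | 0 => phi (lowcopy hf)
  | i'.+1 => let y := gseq phi hf i' in
             if is_upper y then y else phi (above y)
  end.

Definition stops_at (phi : tri w -> tri w) (f : F) (hf : 0 < w f) (n : nat) :=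
  is_upper (gseq phi hf n) /\ forall i, i < n -> ~~ is_upper (gseq phi hf i).

End Copies.

(* Main.v *)
Require Import Defs.
From mathcomp Require Import all_boot.

Set Implicit Arguments.
Section Aux.
Variables (F : finType) (w : F -> nat) (phi : tri w -> tri w).
Hypothesis phi_inj : injective phi.

Lemma above_val (y : tri w) : ~~ is_upper y ->
  sval (above y) = ((sval y).1, (sval y).2.+1).
Proof.
rewrite /above /is_upper; case: y => [[f k] hk] /= hn.
rewrite val_insubd /= ifT //.
by rewrite ltn_neqAle hn hk.
Qed.

Lemma above_inj (y z : tri w) : ~~ is_upper y -> ~~ is_upper z ->
  above y = above z -> y = z.
Proof.
move=> hy hz e; have := congr1 sval e; rewrite !above_val //.
case: y hy {e} => [[a b] hb]; case: z hz => [[c d] hd] /= _ _ [e1 e2].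
by apply: val_inj => /=; rewrite e1 e2.
Qed.

Lemma low_ne_above (f : F) (hf : 0 < w f) (y : tri w) :
  ~~ is_upper y -> lowcopy hf <> above y.
Proof.
move=> hy e; have := congr1 (fun t : tri w => (sval t).2) e.
by rewrite /= above_val.
Qed.

Lemma gseqS (f : F) (hf : 0 < w f) i : ~~ is_upper (gseq phi hf i) ->
  gseq phi hf i.+1 = phi (above (gseq phi hf i)).
Proof. by move=> /negbTE h; rewrite /= h. Qed.

Lemma gseq_inj (f : F) (hf : 0 < w f) K :
  (forall i, i < K -> ~~ is_upper (gseq phi hf i)) ->
  forall i j, i < K -> j < K -> gseq phi hf i = gseq phi hf j -> i = j.
Proof.
move=> hn i; elim: i => [|i IH] [|j] // hi hj.
- rewrite gseqS; last exact: hn j (ltnW hj).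
  move=> /phi_inj e.
  by case: (@low_ne_above f hf _ (hn j (ltnW hj)) e).
- rewrite gseqS; last exact: hn i (ltnW hi).
  move=> /phi_inj e.
  by case: (@low_ne_above f hf _ (hn i (ltnW hi)) (esym e)).
- have hi' := ltnW hi; have hj' := ltnW hj.
  rewrite gseqS; last exact: hn i hi'.
  rewrite gseqS; last exact: hn j hj'.
  move=> /phi_inj /above_inj e.
  by rewrite (IH j hi' hj' (e (hn i hi') (hn j hj'))).
Qed.

Definition M := \max_(f : F) w f.

Lemma code_lt (t : tri w) : (sval t).2 < M.
Proof.
case: t => [[f k] hk] /=; apply: leq_trans hk _.
exact: (leq_bigmax f).
Qed.

Definition code (t : tri w) : F * 'I_M := ((sval t).1, Ordinal (code_lt t)).

Lemma code_inj : injective code.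
Proof.
move=> [[a b] hb] [[c d] hd] [e1 e2]; apply: val_inj => /=.
by rewrite e1 e2.
Qed.

Lemma finite_stop (f : F) (hf : 0 < w f) : exists n, stops_at phi hf n.
Proof.
pose K := (#|F| * M).+1.
have ex : exists i, is_upper (gseq phi hf i).
  case: (boolP [exists i : 'I_K, is_upper (gseq phi hf i)]).
    by case/existsP => i hi; exists i.
  move/existsPn => hn.
  have hn' : forall i, i < K -> ~~ is_upper (gseq phi hf i).
    by move=> i hi; exact: (hn (Ordinal hi)).
  pose g (i : 'I_K) := code (gseq phi hf i).
  have ginj : injective g.
    move=> i j /code_inj e; apply: val_inj.
    exact: (@gseq_inj f hf K hn' i j (ltn_ord i) (ltn_ord j) e).
  have := @leq_card _ _ g ginj; rewrite card_prod !card_ord /K ltnn //.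
case: (ex_minnP ex) => n hn hmin; exists n; split => // i hi.
apply/negP => /hmin; rewrite leqNgt hi //.
Qed.

Lemma back (f f' : F) (hf : 0 < w f) (hf' : 0 < w f') n n' :
  stops_at phi hf n -> stops_at phi hf' n' ->
  gseq phi hf n = gseq phi hf' n' ->
  forall k, k <= n -> k <= n' -> gseq phi hf (n - k) = gseq phi hf' (n' - k).
Proof.
move=> [_ s1] [_ s2] e; elim=> [|k IH] h1 h2; first by rewrite !subn0.
have h1' := ltnW h1; have h2' := ltnW h2.
have := IH h1' h2'.
have u1 : ~~ is_upper (gseq phi hf (n - k.+1)).
  by apply: s1; rewrite ltn_subrL; apply/andP; split => //; exact: leq_ltn_trans h1.
have u2 : ~~ is_upper (gseq phi hf' (n' - k.+1)).
  by apply: s2; rewrite ltn_subrL; apply/andP; split => //; exact: leq_ltn_trans h2.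
rewrite -(subnSK h1) -(subnSK h2) (gseqS _ _ _ u1) (gseqS _ _ _ u2).
move/phi_inj/above_inj; exact.
Qed.

Lemma distinct_ends (f f' : F) (hf : 0 < w f) (hf' : 0 < w f') n n' :
  f <> f' -> n <= n' -> stops_at phi hf n -> stops_at phi hf' n' ->
  gseq phi hf n <> gseq phi hf' n'.
Proof.
move=> ne le s1 s2 e.
have := back s1 s2 e n (leqnn n) le; rewrite subnn.
case E: (n' - n) => [|m] /=.
  move/phi_inj => e2; apply: ne; exact: (congr1 (fun t : tri w => (sval t).1) e2).
case: s2 => _ s2.
have hm : m < n' by rewrite -ltnS -E ltnS leq_subr.
rewrite ifN; last exact: s2.
move/phi_inj; apply: low_ne_above; exact: s2.
Qed.

End Aux.
Unset Implicit Arguments.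

Theorem lemma3p4 (F E : finType) (side1 side2 : E -> {set F}) (w : F -> nat)
    (phi : tri w -> tri w) :
  weight_system side1 side2 w ->
  bijective phi ->
  (forall (f : F) (hf : 0 < w f), exists n, stops_at phi hf n) /\
  (forall (f f' : F) (hf : 0 < w f) (hf' : 0 < w f') (n n' : nat),
      f <> f' -> stops_at phi hf n -> stops_at phi hf' n' ->
      gseq phi hf n <> gseq phi hf' n').
Proof.
move=> _ /bij_inj pinj; split; first exact: finite_stop.
move=> f f' hf hf' n n' ne s1 s2.
case: (leqP n n') => h.
  exact: distinct_ends.
move=> e; apply: (distinct_ends pinj (nesym ne) (ltnW h) s2 s1); by rewrite e.
Qed.
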